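(* Let $n\ge2$, $j\ge0$, $b\in B$, $(\mu_i)_{i=1}^n\in\mathbb Z^n$ and $\mu=-\mu_1\Lambda_0+(\mu_1-\mu_2)\Lambda_1+\cdots+(\mu_{n-1}-\mu_n)\Lambda_{n-1}+2\mu_n\Lambda_n$. Then $$g_j(b,\mu)=\sum_\gamma q^{\frac12\sum_{i\in B,i\ne0}\gamma_i(\gamma_i-1)+\sum_{i\in B}H(b\otimes i)\gamma_i}\begin{bmatrix}j\\ \gamma\end{bmatrix}_q,$$ the sum over $\gamma=(\gamma_i)_{i\in B}\in\mathbb Z_{\ge0}^{2n+1}$ with $\gamma_i-\gamma_{\bar i}=\mu_i$ for $i=1,\dots,n$ and $\sum_{i\in B}\gamma_i=j$.
   Context: Affine algebra $A^{(2)}_{2n}$ with Dynkin nodes labeled so that the unique level-1 dominant weight is $\Lambda_n$; fundamental weights $\Lambda_0,\dots,\Lambda_n$, $P_{cl}=\bigoplus\mathbb Z\Lambda_i$. $B=\{1,\dots,n,0,\bar n,\dots,\bar1\}$ totally ordered by $1\prec\cdots\prec n\prec0\prec\bar n\prec\cdots\prec\bar1$. Weights: $wt(\bar b)=-wt(b)$, $wt(b)=\Lambda_b-\Lambda_{b-1}$ for $1\le b\le n-1$ (so $wt(1)=\Lambda_1-\Lambda_0$), $wt(n)=2\Lambda_n-\Lambda_{n-1}$, $wt(0)=0$. Energy function: $H(b\otimes b')=0$ if $b\prec b'$, $=1$ if $b\succeq b'$, except $H(0\otimes0)=0$. For $j\ge0$, $b\in B$, $\mu\in P_{cl}$: $g_j(b,\mu)=\sum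 q^{\sum_{i=1}^j iH(b_{i+1}\otimes b_i)}$, summed over $(b_j,\dots,b_1)\in B^j$ with $wt(b_j)+\cdots+wt(b_1)=\mu$, where $b_{j+1}=b$. For an integer vector $\gamma=(\gamma_b)_{b\in B}$: $\begin{bmatrix}j\\ \gamma\end{bmatrix}_q=(q)_j/\prod_{b\in B}(q)_{\gamma_b}$ if $\sum_b\gamma_b=j$ and all $\gamma_b\ge0$, and $0$ otherwise; $(q)_m=\prod_{i=1}^m(1-q^i)$. *)

(* Defs.v *)
From HB Require Import structures.
From mathcomp Require Import all_boot all_order all_algebra.
Set Implicit Arguments. Unset Strict Implicit. Unset Printing Implicit Defensive.
Import Order.TTheory GRing.Theory Num.Theory.
Local Open Scope ring_scope.

(* Crystal B for A^{(2)}_{2n}, encoded as 'I_(2n+1) listed in the total order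
   1 < 2 < ... < n < 0 < nbar < ... < 1bar :
   position p < n      <-> letter p+1
   position p = n      <-> letter 0
   position p > n      <-> letter bar(2n+1-p). *)
Definition Bn (n : nat) := 'I_(n.*2.+1).

Definition pos_unbar (n k : nat) : nat := k.-1.
Definition pos_zero (n : nat) : nat := n.
Definition pos_bar (n k : nat) : nat := n.*2.+1 - k.

(* elements of P_cl = (+)_{i=0..n} Z Lambda_i are represented by their
   coefficient functions nat -> int (only indices 0..n are relevant). *)
Definition Lam (i : nat) : nat -> int := fun k => (k == i)%:Z.

Definition wt_unbar (n k : nat) : nat -> int :=
  fun i => if k == n then 2%:Z * Lam n i - Lam n.-1 i
           else Lam k i - Lam k.-1 i.

Definition wt (n : nat) (b : Bn n) : nat -> int :=
  fun i =>
    if (b < n)%N then wt_unbar n b.+1 i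
    else if (b == n :> nat) then 0
    else - wt_unbar n (n.*2.+1 - b) i.

Definition H (n : nat) (b b' : Bn n) : nat :=
  if (b < b')%N then 0%N
  else if (b == n :> nat) && (b' == n :> nat) then 0%N
  else 1%N.

Definition QF := {fraction {poly int}}.
Definition q : QF := @FracField.tofrac _ 'X.

Definition qpoch (m : nat) : QF := \prod_(1 <= i < m.+1) (1 - q ^+ i).

(* g_j(b, mu): sum over (b_j,...,b_1) in B^j, here t : 'I_j -> B with
   t i = b_{i+1}; b_{j+1} = b. *)
Definition bseq (n j : nat) (b : Bn n) (t : {ffun 'I_j -> Bn n}) (k : nat) : Bn n :=
  if (k < j)%N then (if insub k is Some i then t i else b) else b.
  (* bseq n j b t k = b_{k+1} for 0 <= k <= j *)

Definition energy (n j : nat) (b : Bn n) (t : {ffun 'I_j -> Bn n}) : nat :=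
  \sum_(1 <= i < j.+1) i * H (bseq b t i) (bseq b t i.-1).

Definition g (n j : nat) (b : Bn n) (mu : nat -> int) : QF :=
  \sum_(t : {ffun 'I_j -> Bn n} |
        [forall i : 'I_n.+1, (\sum_(k < j) wt (t k) i) == mu i])
     q ^+ energy b t.

Definition qmultinom (n j : nat) (gamma : Bn n -> nat) : QF :=
  if (\sum_(c : Bn n) gamma c == j)%N
  then qpoch j / \prod_(c : Bn n) qpoch (gamma c)
  else 0.

Definition mu_of (n : nat) (m : nat -> int) : nat -> int :=
  fun i => if i == 0%N then - m 1%N
           else if (i < n)%N then m i - m i.+1
           else if i == n then 2%:Z * m n
           else 0.

(* Main.v *)
Require Import Defs.
From HB Require Import structures.
From mathcomp Require Import all_boot all_order all_algebra.
From mathcomp Require Import zify ring.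
Set Implicit Arguments. Unset Strict Implicit. Unset Printing Implicit Defensive.
Import Order.TTheory GRing.Theory Num.Theory.
Local Open Scope ring_scope.


Section Key.
Variable (R : comPzRingType) (x : R).
Variable n : nat.
Local Notation T := (Bn n).
Local Notation N := (n.*2.+1).

Definition qp m : R := \prod_(1 <= i < m.+1) (1 - x ^+ i).

Lemma qpS m : qp m.+1 = qp m * (1 - x ^+ m.+1).
Proof. by rewrite /qp big_nat_recr. Qed.

Lemma H_thr (b c : T) : H b c = (c < (if b == n :> nat then n else b.+1))%N.
Proof.
rewrite /H; case: (ltnP b c) => h1 /=; case: (b =P n :> nat) => h2; case: (c =P n :> nat) => h3 /=; try lia;
 case: ifP; lia.
Qed.

Lemma thr_le (b : T) : ((if b == n :> nat then n else b.+1) <= N)%N.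
Proof. case: eqP => _; have := ltn_ord b; lia. Qed.

Definition Pn (gam : T -> nat) t := (\sum_(0 <= k < t) gam (inord k))%N.

Lemma sum_lt (gam : T -> nat) t : (t <= N)%N ->
  (\sum_(d : T | (d < t)%N) gam d)%N = Pn gam t.
Proof.
move=> tN; rewrite /Pn (big_nat_widen _ _ _ _ _ tN) //.
rewrite big_mkord; apply: eq_bigr => i _; by rewrite inord_val.
Qed.

Lemma sum_all (gam : T -> nat) : (\sum_(d : T) gam d)%N = Pn gam N.
Proof. rewrite -(sum_lt gam (leqnn _)); apply: eq_bigl => d; by rewrite ltn_ord. Qed.

Lemma tele_gen (u : nat -> R) m t : (t <= N)%N ->
  \sum_(0 <= i < N) x ^+ (m * (i < t)) * (u i - u i.+1) =
  x ^+ m * (u 0%N - u t) + (u t - u N).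
Proof.
move=> tN; rewrite (big_cat_nat (leq0n t) tN) /=.
congr (_ + _).
  rewrite (eq_big_nat _ _ (F2 := fun i => x ^+ m * (u i - u i.+1))); last first.
    by move=> i /andP[_ ->]; rewrite muln1.
  rewrite -mulr_sumr; congr (_ * _).
  rewrite -opprB -(telescope_sumr _ (leq0n t)) -sumrN; apply: eq_bigr => i _.
  by rewrite opprB.
rewrite (eq_big_nat _ _ (F2 := fun i => (u i - u i.+1))); last first.
  by move=> i /andP[h _]; rewrite ltnNge h muln0 expr0 mul1r.
rewrite -opprB -(telescope_sumr _ tN) -sumrN; apply: eq_bigr => i _.
by rewrite opprB.
Qed.

Lemma ord_to_nat (F : T -> R) : \sum_(c : T) F c = \sum_(0 <= i < N) F (inord i).
Proof. rewrite big_mkord; apply: eq_bigr => i _; by rewrite inord_val. Qed.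

Lemma tele (gam : T -> nat) (b : T) m : (\sum_(d : T) gam d)%N = m ->
  \sum_(c : T) x ^+ (m * H b c + Pn gam c) * (1 - x ^+ gam c) =
  x ^+ (\sum_(c : T) H b c * gam c) * (1 - x ^+ m).
Proof.
move=> hm.
set t := (if b == n :> nat then n else b.+1).
have tN : (t <= N)%N by apply: thr_le.
have -> : (\sum_(c : T) H b c * gam c)%N = Pn gam t.
  rewrite -(sum_lt gam tN) [RHS]big_mkcond /=; apply: eq_bigr => c _.
  by rewrite H_thr -/t; case: (c < t)%N; rewrite ?mul1n ?mul0n.
rewrite (ord_to_nat (fun c : T => x ^+ (m * H b c + Pn gam c) * (1 - x ^+ gam c))).
rewrite (eq_big_nat _ _ (F2 := fun i => x ^+ (m * (i < t)) * (x ^+ Pn gam i - x ^+ Pn gam i.+1))).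
  rewrite tele_gen // /Pn big_geq // expr0.
  have -> : (\sum_(0 <= k < N) gam (inord k))%N = m by rewrite -hm sum_all.
  rewrite mulrBr mulr1; ring.
move=> i /andP[_ iN].
rewrite H_thr -/t inordK // exprD -mulrA; congr (_ * _).
by rewrite /Pn big_nat_recr //= exprD mulrBr mulr1.
Qed.

Fixpoint statR (b : T) (s : seq T) : nat :=
  if s is c :: s' then ((size s').+1 * H b c + statR c s')%N else 0%N.

Fixpoint W k : seq (seq T) :=
  if k is k'.+1 then [seq c :: s | c <- index_enum T, s <- W k'] else [:: [::]].

Lemma size_W k s : s \in W k -> size s = k.
Proof.
elim: k s => [|k IH] s /=; first by rewrite inE => /eqP ->.
by case/allpairsPdep => c [s' [_ hs' ->]] /=; rewrite (IH _ hs').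
Qed.

Definition Sg (gam : T -> nat) := (\sum_(c : T) H c c * 'C(gam c, 2))%N.
Definition dec (gam : T -> nat) (c : T) := fun d : T => if d == c then (gam d).-1 else gam d.

Lemma cnt_cons c s (gam : T -> nat) :
  [forall d, count_mem d (c :: s) == gam d] =
  (0 < gam c)%N && [forall d, count_mem d s == dec gam c d].
Proof.
apply/forallP/andP.
  move=> h; have hc := h c; move/eqP: hc; rewrite /= eqxx => <-; split => //.
  apply/forallP => d; move/eqP: (h d) => /= hd; rewrite /dec -hd.
  case: (d =P c) => [->|ne]; first by rewrite eqxx.
  by rewrite (_ : (c == d) = false) //; apply/eqP => e; apply: ne.
case=> h0 /forallP h d; move/eqP: (h d); rewrite /dec /= => hd.
case: (d =P c) hd => [->|ne] hd; first by rewrite eqxx hd add1n prednK.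
by rewrite hd (_ : (c == d) = false) //; apply/eqP => e; apply: ne.
Qed.

Lemma bin2S g : 'C(g.+1, 2) = ('C(g, 2) + g)%N.
Proof. by rewrite binS bin1. Qed.

Lemma expo (gam : T -> nat) (c : T) : (0 < gam c)%N ->
  (Sg (dec gam c) + \sum_(d : T) H c d * dec gam c d = Sg gam + \sum_(d : T | (d < c)%N) gam d)%N.
Proof.
move=> h0.
have e1 : Sg gam = (Sg (dec gam c) + H c c * (gam c).-1)%N.
  rewrite /Sg (bigD1 c) //= [X in _ = (X + _)%N](bigD1 c) //= /dec eqxx.
  rewrite -{1}(prednK h0) bin2S.
  have -> : (\sum_(i < N | i != c) H i i * 'C(gam i, 2) =
            \sum_(i < N | i != c) H i i * 'C(if i == c then (gam i).-1 else gam i, 2))%N.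
    by apply: eq_bigr => i /negPf ->.
  by rewrite mulnDr addnAC.
have e2 : (\sum_(d : T) H c d * gam d = \sum_(d : T) H c d * dec gam c d + H c c)%N.
  rewrite (bigD1 c) //= [X in _ = (X + _)%N](bigD1 c) //= /dec eqxx.
  have -> : (\sum_(i < N | i != c) H c i * gam i =
            \sum_(i < N | i != c) H c i * (if i == c then (gam i).-1 else gam i))%N.
    by apply: eq_bigr => i /negPf ->.
  by rewrite -{1}(prednK h0) mulnS [in RHS]addnC addnA.
have e3 : (\sum_(d : T) H c d * gam d = \sum_(d : T | (d < c)%N) gam d + H c c * gam c)%N.
  rewrite (bigID (fun d : T => (d < c)%N)) /=; congr (_ + _)%N.
    apply: eq_bigr => d hd; rewrite /H ltnNge ltnW //=.
    by case: eqP => h1; case: eqP => h2 //=; rewrite ?mul1n //; lia.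
  rewrite (bigD1 c) ?ltnn //= big1 ?addn0 // => d /andP[hd hdc].
  rewrite /H.
  have : (c < d)%N by move: hd hdc; rewrite -leqNgt => h1 h2; rewrite ltn_neqAle h1 andbT eq_sym.
  by move=> ->.
have e4 : (H c c * gam c = H c c * (gam c).-1 + H c c)%N.
  by rewrite -{1}(prednK h0) mulnS addnC.
move: e1 e2 e3 e4; set A := (H c c * gam c)%N; set B := (H c c * (gam c).-1)%N; lia.
Qed.

Lemma sum_dec (gam : T -> nat) (c : T) : (0 < gam c)%N ->
  (\sum_(d : T) gam d = (\sum_(d : T) dec gam c d).+1)%N.
Proof.
move=> h0; rewrite (bigD1 c) //= [in RHS](bigD1 c) //= /dec eqxx -addSn prednK //.
congr (_ + _)%N; apply: eq_bigr => i /negPf ->; done.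
Qed.

Lemma prod_dec (gam : T -> nat) (c : T) : (0 < gam c)%N ->
  \prod_(d : T) qp (gam d) = (1 - x ^+ gam c) * \prod_(d : T) qp (dec gam c d).
Proof.
move=> h0; rewrite (bigD1 c) //= [in RHS](bigD1 c) //= /dec eqxx -{1 2}(prednK h0) qpS.
have -> : \prod_(i < N | i != c) qp (gam i) =
  \prod_(i < N | i != c) qp (if i == c then (gam i).-1 else gam i).
  by apply: eq_bigr => i /negPf ->.
ring.
Qed.

Lemma key k : forall (b : T) (gam : T -> nat), (\sum_(c : T) gam c)%N = k ->
  (\sum_(s <- W k | [forall d, count_mem d s == gam d]) x ^+ statR b s)
    * \prod_(c : T) qp (gam c) =
  x ^+ (Sg gam + \sum_(c : T) H b c * gam c) * qp k.
Proof.
elim: k => [|k IH] b gam hsum.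
  have g0 : forall c, gam c = 0%N.
    move=> c; apply/eqP; rewrite -leqn0 -hsum (bigD1 c) //= leq_addr //.
  rewrite /= big_cons big_nil ifT; last by apply/forallP => d; rewrite g0.
  rewrite /= addr0 /Sg.
  rewrite big1; last by move=> c _; rewrite g0 /qp big_geq.
  rewrite big1; last by move=> c _; rewrite g0 muln0.
  rewrite big1; last by move=> c _; rewrite g0 muln0.
  by rewrite /qp big_geq.
rewrite qpS.
have tl := tele b hsum.
have -> : x ^+ (Sg gam + \sum_(c : T) H b c * gam c) * (qp k * (1 - x ^+ k.+1)) =
   x ^+ Sg gam * qp k * (x ^+ (\sum_(c : T) H b c * gam c) * (1 - x ^+ k.+1)).
  rewrite exprD; ring.
rewrite -tl mulr_sumr big_mkcond /= big_allpairs_dep /= mulr_suml.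
apply: eq_bigr => c _.
rewrite (eq_big_seq (fun s => x ^+ (k.+1 * H b c) *
   (if [forall d, count_mem d s == dec gam c d] then x ^+ statR c s else 0) *+ (0 < gam c)%N)); last first.
  move=> s hs; rewrite cnt_cons /= (size_W hs).
  by case: (0 < gam c)%N; case: [forall d, _]; rewrite /= ?mulr0 ?exprD.
case: (posnP (gam c)) => h0.
  rewrite big1; last by move=> s _; rewrite mulr0n.
  by rewrite h0 expr0 subrr !mulr0 mul0r.
have hs : (\sum_(d : T) dec gam c d)%N = k by move: hsum; rewrite (sum_dec h0) => -[].
rewrite (eq_bigr (fun s => x ^+ (k.+1 * H b c) *
   (if [forall d, count_mem d s == dec gam c d] then x ^+ statR c s else 0))); last first.
  by move=> s _; rewrite mulr1n.
rewrite -mulr_sumr -big_mkcond /= (prod_dec h0).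
have := IH c _ hs; rewrite (expo h0) (sum_lt _ (ltnW (ltn_ord c))) => e.
rewrite mulrA [_ * (1 - _)]mulrC mulrA -mulrA (mulrC _ (\prod_i _)) mulrA -[X in X * _]mulrA e.
rewrite !exprD; ring.
Qed.

End Key.


Section Wt.
Variable n : nat.
Local Notation T := (Bn n).
Local Notation N := (n.*2.+1).

Lemma wt_formula (c : T) (i : nat) : (2 <= n)%N -> (i <= n)%N ->
  wt c i = ((0 < i)%N)%:Z * (1 + (i == n)%:Z) * ((c == i.-1 :> nat)%:Z - (c == (N - i)%N :> nat)%:Z)
     + ((i < n)%N)%:Z * ((c == (n.*2 - i)%N :> nat)%:Z - (c == i :> nat)%:Z).
Proof.
move=> n2 hi; have cN := ltn_ord c.
rewrite /wt /wt_unbar /Lam; case: (ltngtP c n) => h.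
- have -> : (c == (N - i)%N :> nat) = false by apply/eqP; lia.
  have -> : (c == (n.*2 - i)%N :> nat) = false by apply/eqP; lia.
  do ? (case: eqP => ?); do ? (case: ltnP => ?); simpl; lia.
- have -> : (c == i.-1 :> nat) = false by apply/eqP; lia.
  have -> : (c == i :> nat) = false by apply/eqP; lia.
  do ? (case: eqP => ?); do ? (case: ltnP => ?); simpl; lia.
- rewrite h. do ? (case: eqP => ?); do ? (case: ltnP => ?); simpl; lia.
Qed.

Lemma sum_ind (f : T -> int) (a : nat) :
  \sum_(c : T) f c * (c == a :> nat)%:Z = if (a < N)%N then f (inord a) else 0.
Proof.
case: ifP => ha.
  rewrite (bigD1 (inord a)) //= inordK // eqxx mulr1 big1 ?addr0 // => c hc.
  have -> : (c == a :> nat) = false.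
    apply/eqP => e; move/eqP: hc; apply; apply: val_inj; rewrite /= inordK //.
  by rewrite mulr0.
rewrite big1 // => c _; have -> : (c == a :> nat) = false.
  by apply/eqP => e; have := ltn_ord c; rewrite e ha.
by rewrite mulr0.
Qed.

Definition dd (f : T -> nat) (k : nat) : int := (f (inord k.-1))%:Z - (f (inord (N - k)%N))%:Z.

Lemma D_eval (f : T -> nat) (i : nat) : (2 <= n)%N -> (i <= n)%N ->
  \sum_(c : T) (f c)%:Z * wt c i =
  ((0 < i)%N)%:Z * (1 + (i == n)%:Z) * dd f i - ((i < n)%N)%:Z * dd f i.+1.
Proof.
move=> n2 hi.
rewrite (eq_bigr (fun c : T => ((0 < i)%N)%:Z * (1 + (i == n)%:Z) * ((f c)%:Z * (c == i.-1 :> nat)%:Z)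
   - ((0 < i)%N)%:Z * (1 + (i == n)%:Z) * ((f c)%:Z * (c == (N - i)%N :> nat)%:Z)
   + ((i < n)%N)%:Z * ((f c)%:Z * (c == (n.*2 - i)%N :> nat)%:Z)
   - ((i < n)%N)%:Z * ((f c)%:Z * (c == i :> nat)%:Z))); last first.
  by move=> c _; rewrite wt_formula //; ring.
rewrite !big_split /= !sumrN -!mulr_sumr !sum_ind.
rewrite (_ : (i.-1 < N)%N); last by lia.
rewrite (_ : (n.*2 - i < N)%N); last by lia.
rewrite (_ : (i < N)%N); last by lia.
rewrite /dd /= (_ : (N - i.+1 = n.*2 - i)%N); last by lia.
case: (posnP i) => [->|ip] /=; first by rewrite !mul0r; ring.
rewrite (_ : (N - i < N)%N); last by lia.
ring.
Qed.

Lemma mu_eval (m : nat -> int) (i : nat) : (2 <= n)%N -> (i <= n)%N ->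
  mu_of n m i = ((0 < i)%N)%:Z * (1 + (i == n)%:Z) * m i - ((i < n)%N)%:Z * m i.+1.
Proof.
move=> n2 hi; rewrite /mu_of.
case: (posnP i) => [->|ip]; first by rewrite /= (_ : (0 < n)%N) ?mul0r ?mul1r ?add0r //; lia. 

case: (ltnP i n) => h.
  have -> : (i == n) = false by apply/eqP; lia.
  by rewrite /=; ring.
have ein : i = n by lia.
by rewrite ein eqxx /=; ring.
Qed.

Lemma wcond (f : T -> nat) (m : nat -> int) : (2 <= n)%N ->
  [forall i : 'I_n.+1, \sum_(c : T) (f c)%:Z * wt c i == mu_of n m i] =
  [forall k : 'I_n, dd f k.+1 == m k.+1].
Proof.
move=> n2; apply/forallP/forallP.
  move=> h.
  have hi : forall i, (i <= n)%N ->
      ((0 < i)%N)%:Z * (1 + (i == n)%:Z) * (dd f i - m i) = ((i < n)%N)%:Z * (dd f i.+1 - m i.+1).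
    move=> i hi; move/eqP: (h (inord i)); rewrite inordK // D_eval // mu_eval // => e.
    apply/eqP; rewrite -subr_eq0; apply/eqP; move/eqP: e; rewrite -subr_eq0 => /eqP e.
    rewrite -[RHS]e; ring.
  have ind : forall r, (r < n)%N -> dd f (n - r)%N - m (n - r)%N = 0.
    elim=> [|r IH] hr.
      have := hi n (leqnn n); rewrite ltnn eqxx subn0 (_ : (0 < n)%N) ?mul0r; last by lia.
      move=> /eqP; rewrite mul1r mulf_eq0 => /orP[|/eqP] //.
    have := hi (n - r.+1)%N (leq_subr _ _); rewrite (_ : (n - r.+1).+1 = n - r)%N; last by lia.
    rewrite IH; last by lia.
    rewrite (_ : (0 < n - r.+1)%N); last by lia.
    rewrite (_ : (n - r <= n)%N); last by lia.
    rewrite (_ : ((n - r.+1)%N == n) = false); last by apply/eqP; lia.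
    by rewrite mulr0 addr0 !mul1r => ->.
  move=> k; have kn := ltn_ord k; have := ind (n - k.+1)%N; rewrite (_ : (n - (n - k.+1) = k.+1)%N); last by lia.
  move=> e; rewrite -subr_eq0 e //; lia.
move=> h i; have hi : (i <= n)%N by have := ltn_ord i; lia.
rewrite D_eval // mu_eval //.
have e1 : ((0 < i)%N)%:Z * (dd f i) = ((0 < i)%N)%:Z * m i.
  case: (posnP i) => [->|ip]; first by rewrite !mul0r.
  have hlt : (i.-1 < n)%N by lia.
  by have := h (Ordinal hlt); rewrite /= prednK // => /eqP ->.
have e2 : ((i < n)%N)%:Z * (dd f i.+1) = ((i < n)%N)%:Z * m i.+1.
  case: (ltnP i n) => ip; last by rewrite !mul0r.
  by have := h (Ordinal ip) => /= /eqP ->.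
apply/eqP; have r1 : forall (a b y : int), a * b * y = b * (a * y) by move=> *; ring.
by rewrite !r1 e1 e2.
Qed.
End Wt.


Section Main.
Variable n : nat.
Local Notation T := (Bn n).
Local Notation N := (n.*2.+1).

Lemma bseq_nth j (b : T) (t : {ffun 'I_j -> T}) k : Defs.bseq b t k = nth b (codom t) k.
Proof.
rewrite /Defs.bseq; case: ltnP => h.
  by rewrite insubT /= codom_ffun (nth_fgraph_ord b (Ordinal h)).
by rewrite nth_default // size_codom card_ord.
Qed.

Lemma nth_rc (b c : T) s i : (i <= size s)%N -> nth b (rcons s c) i = nth c s i.
Proof.
rewrite nth_rcons; case: (ltnP i (size s)) => h1 h2; first exact: set_nth_default.
have e : i = size s by lia.
by rewrite e eqxx nth_default.
Qed.

Lemma statR_rev (b : T) s : statR b (rev s) =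
  (\sum_(1 <= i < (size s).+1) i * H (nth b s i) (nth b s i.-1))%N.
Proof.
elim/last_ind: s b => [|s c IH] b; first by rewrite /= big_geq.
rewrite rev_rcons /= ?size_rev IH size_rcons [in RHS]big_nat_recr //=.
rewrite [nth b (rcons s c) (size s).+1]nth_default ?size_rcons // nth_rcons ltnn eqxx.
rewrite addnC; congr (_ + _)%N.
apply: eq_big_nat => i /andP[h1 h2]; rewrite !nth_rc //; lia.
Qed.

Lemma energy_stat j (b : T) (t : {ffun 'I_j -> T}) : energy b t = statR b (rev (codom t)).
Proof.
rewrite statR_rev size_codom card_ord /energy; apply: eq_bigr => i _.
by rewrite !bseq_nth.
Qed.

Lemma mem_W k s : (s \in W n k) = (size s == k).
Proof.
elim: k s => [|k IH] s /=; first by case: s.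
apply/allpairsPdep/idP.
  by case=> c [s' [_ hs' ->]] /=; rewrite eqSS -IH.
case: s => // c s' /= h; exists c, s'; split => //; first by rewrite mem_index_enum.
by rewrite IH.
Qed.

Lemma uniq_W k : uniq (W n k).
Proof.
elim: k => [|k IH] //=; apply: allpairs_uniq => //; first exact: index_enum_uniq.
by move=> [c s] [c' s'] _ _ /= [-> ->].
Qed.

Lemma codom_nth k (u : seq T) x0 : size u = k -> codom [ffun i : 'I_k => nth x0 u i] = u.
Proof.
move=> hu; rewrite codomE.
transitivity (map (nth x0 u) (map val (enum 'I_k))).
  by rewrite -map_comp; apply: eq_map => i; rewrite ffunE.
by rewrite val_enum_ord -hu -/(mkseq _ _) mkseq_nth.
Qed.

Lemma sum_ffun_W k (F : seq T -> QF) :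
  \sum_(t : {ffun 'I_k -> T}) F (rev (codom t)) = \sum_(s <- W n k) F s.
Proof.
transitivity (\sum_(s <- map (fun t : {ffun 'I_k -> T} => rev (codom t)) (index_enum _)) F s).
  by rewrite big_map.
apply: perm_big; apply: uniq_perm.
- rewrite map_inj_uniq ?index_enum_uniq // => t1 t2 /(can_inj revK) e.
  apply/ffunP => i; have := congr1 (fun s => nth (t1 i) s i) e.
  by rewrite !codom_ffun !nth_fgraph_ord.
- exact: uniq_W.
- move=> s; rewrite mem_W; apply/mapP/idP.
    by case=> t _ ->; rewrite size_rev size_codom card_ord.
  move=> /eqP hs; exists [ffun i : 'I_k => nth ord0 (rev s) i]; first by rewrite mem_index_enum.
  by rewrite codom_nth ?revK // size_rev.
Qed.

Lemma sum_seq_count (F : T -> int) (s : seq T) :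
  \sum_(y <- s) F y = \sum_(c : T) (count_mem c s)%:Z * F c.
Proof.
elim: s => [|y s IH]; first by rewrite big_nil big1 // => c _; rewrite mul0r.
rewrite big_cons IH [RHS](eq_bigr (fun c => ((y == c))%:Z * F c + (count_mem c s)%:Z * F c)); last first.
  by move=> c _; rewrite /= PoszD mulrDl.
rewrite big_split /=; congr (_ + _).
rewrite (bigD1 y) //= eqxx mul1r big1 ?addr0 // => c /negPf; rewrite eq_sym => ->.
by rewrite mul0r.
Qed.

Lemma sum_count (s : seq T) : (\sum_(c : T) count_mem c s)%N = size s.
Proof.
elim: s => [|y s IH]; first by rewrite big1.
rewrite /= big_split /= IH (bigD1 y) //= eqxx big1 ?addn0 ?add1n // => c /negPf.
by rewrite eq_sym => ->.
Qed.

Lemma sum_wt j (t : {ffun 'I_j -> T}) i :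
  \sum_(k < j) wt (t k) i = \sum_(c : T) (count_mem c (codom t))%:Z * wt c i.
Proof.
rewrite -sum_seq_count codomE big_map big_enum /=; apply: eq_bigl => k; done.
Qed.

End Main.

Lemma one_sub_q_neq0 i : (0 < i)%N -> 1 - q ^+ i != 0.
Proof.
move=> hi; rewrite /q -tofracXn -tofrac1 -tofracB tofrac_eq0; apply/eqP => h.
have := congr1 (fun p : {poly int} => p`_0) h.
rewrite coefB coef1 coefXn coef0 (_ : (0 == i)%N = false); last by apply/eqP; lia.
by rewrite subr0 => /eqP; rewrite oner_eq0.
Qed.

Lemma qpoch_neq0 m : qpoch m != 0.
Proof.
rewrite /qpoch prodf_seq_neq0; apply/allP => i; rewrite mem_index_iota => /andP[h _].
exact: one_sub_q_neq0.
Qed.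

Lemma bin2_dbl g : ('C(g, 2) * 2 = g * g.-1)%N.
Proof.
elim: g => // g IH; rewrite bin2S mulnDl IH; case: g {IH} => //= g; nia.
Qed.

Lemma Sg_eq n (gam : Bn n -> nat) :
  Sg gam = ((\sum_(c : Bn n | c != pos_zero n :> nat) gam c * (gam c).-1) %/ 2)%N.
Proof.
rewrite /Sg [in RHS](eq_bigr (fun c : Bn n => 2 * (H c c * 'C(gam c, 2)))%N); last first.
  move=> c; rewrite /pos_zero => hc; rewrite /H ltnn andbb (negPf hc) mul1n.
  by rewrite [RHS]mulnC bin2_dbl.
rewrite -big_distrr /= mulKn //.
rewrite [RHS]big_mkcond /=; apply: eq_bigr => c _; rewrite /H ltnn andbb /pos_zero.
by case: eqP.
Qed.


Definition cont n j (t : {ffun 'I_j -> Bn n}) : {ffun Bn n -> 'I_j.+1} :=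
  [ffun c => inord (count_mem c (codom t))].

Lemma cont_val n j (t : {ffun 'I_j -> Bn n}) c : (cont t c : nat) = count_mem c (codom t).
Proof.
rewrite ffunE inordK // ltnS; apply: leq_trans (count_size _ _) _.
by rewrite size_codom card_ord.
Qed.

Lemma cont_eq n j (t : {ffun 'I_j -> Bn n}) (gam : {ffun Bn n -> 'I_j.+1}) :
  (cont t == gam) = [forall d, count_mem d (rev (codom t)) == (gam d : nat)].
Proof.
apply/eqP/forallP.
  by move=> <- d; rewrite count_rev cont_val.
move=> h; apply/ffunP => d; apply: val_inj; rewrite /= cont_val -count_rev; exact/eqP/h.
Qed.

Lemma dd_ext n (f1 f2 : Bn n -> nat) k : f1 =1 f2 -> dd f1 k = dd f2 k.
Proof. by move=> e; rewrite /dd !e. Qed.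

Lemma P_iff n j (t : {ffun 'I_j -> Bn n}) m : (2 <= n)%N ->
  [forall i : 'I_n.+1, (\sum_(k < j) wt (t k) i) == mu_of n m i] =
  [forall k : 'I_n, dd (fun c => count_mem c (codom t)) k.+1 == m k.+1].
Proof. move=> n2; rewrite -wcond //; apply: eq_forallb => i; by rewrite sum_wt. Qed.

Unset Implicit Arguments.
Theorem mainTheorem16 (n j : nat) (b : Bn n) (m : nat -> int) :
  (2 <= n)%N ->
  g j b (mu_of n m) =
  \sum_(gam : {ffun Bn n -> 'I_j.+1} |
          [forall k : 'I_n,
             ((gam (inord (pos_unbar n k.+1)))%:Z
              - (gam (inord (pos_bar n k.+1)))%:Z == m k.+1)]
          && (\sum_(c : Bn n) gam c == j)%N)
     q ^+ ((\sum_(c : Bn n | c != pos_zero n :> nat) gam c * (gam c).-1) %/ 2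
           + \sum_(c : Bn n) H b c * gam c)%N
     * qmultinom j (fun c => nat_of_ord (gam c)).
Proof.
move=> n2.
rewrite /g (partition_big (@cont n j) (fun gam : {ffun Bn n -> 'I_j.+1} =>
          [forall k : 'I_n,
             ((gam (inord (pos_unbar n k.+1)))%:Z
              - (gam (inord (pos_bar n k.+1)))%:Z == m k.+1)]
          && (\sum_(c : Bn n) gam c == j)%N)); last first.
  move=> t; rewrite P_iff // => hP; apply/andP; split.
    apply/forallP => k; have := forallP hP k.
    by rewrite (@dd_ext _ _ (fun c => cont t c)) // => c; rewrite cont_val.
  rewrite (eq_bigr (fun c => count_mem c (codom t))); last by move=> c _; rewrite cont_val.
  by rewrite sum_count size_codom card_ord.
apply: eq_bigr => gam /andP[hw hs].
rewrite (eq_bigl (fun t => cont t == gam)); last first.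
  move=> t; case E: (cont t == gam); rewrite ?andbF ?andbT //.
  rewrite P_iff //; apply/forallP => k; have := forallP hw k.
  rewrite (@dd_ext _ _ (fun c => gam c)) //.
  by move=> c; move/eqP: E => <-; rewrite cont_val.
rewrite big_mkcond /=.
rewrite (eq_bigr (fun t : {ffun 'I_j -> Bn n} =>
   (fun s => if [forall d, count_mem d s == (gam d : nat)] then q ^+ statR b s else 0)
   (rev (codom t)))); last by move=> t _; rewrite cont_eq energy_stat.
rewrite (@sum_ffun_W n j (fun s => if [forall d, count_mem d s == (gam d : nat)] then q ^+ statR b s else 0)).
rewrite -big_mkcond /=.
have hk := key q b (gam := fun c => nat_of_ord (gam c)) (eqP hs).
set S := \sum_(s <- _ | _) _.
have hk' : S * \prod_(c : Bn n) qpoch (gam c) =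
   q ^+ (Sg (fun c => nat_of_ord (gam c)) + \sum_(c : Bn n) H b c * gam c) * qpoch j := hk.
have hP : \prod_(c : Bn n) qpoch (gam c) != 0.
  by apply/prodf_neq0 => c _; exact: qpoch_neq0.
rewrite /qmultinom hs -(mulfK hP S) hk' Sg_eq.
by rewrite mulrA.
Qed.
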